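(* Let $\mathcal{P}$ be a nondegenerate partial geometry $pg(s,t,\alpha)$. If the point graph of $\mathcal{P}$ is $3$-e.c., then $$\alpha(t^2-1)(s-\alpha+1)\ \ge\ \frac{(s+1)(st+\alpha)}{\alpha}+(\alpha-2s)(t+1)-2.$$
   Context: A partial geometry $pg(s,t,\alpha)$ is an incidence structure of points and lines such that any two distinct points lie on at most one common line, every line contains exactly $s+1$ points, every point lies on exactly $t+1$ lines, and for every point $p$ and line $L$ with $p$ not on $L$ there are exactly $\alpha$ lines through $p$ meeting $L$. It is nondegenerate if $s\ge2$, $t\ge1$, $\alpha\ge1$. The point graph has the points as vertices, two distinct points adjacent iff collinear. A graph with vertex set $V$ is $n$-e.c. if for every pair of disjoint subsets $A,B\subseteq V$ with $|A\cup B|=n$ (either may be empty) there is a vertex $z\notin A\cup B$ adjacent to every vertex of $A$ and to no vertex of $B$. *)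

(* Defs.v *)
From HB Require Import structures.
From mathcomp Require Import all_boot all_order all_algebra.
Set Implicit Arguments. Unset Strict Implicit. Unset Printing Implicit Defensive.

Definition partial_geometry (Pt Ln : finType) (inc : Pt -> Ln -> bool)
    (s t alpha : nat) : Prop :=
  (forall (p q : Pt) (L M : Ln), p != q ->
      inc p L -> inc q L -> inc p M -> inc q M -> L = M) /\
  (forall L : Ln, #|[set p | inc p L]| = s.+1) /\
  (forall p : Pt, #|[set L | inc p L]| = t.+1) /\
  (forall (p : Pt) (L : Ln), ~~ inc p L ->
      #|[set M | inc p M & [exists q, inc q M && inc q L]]| = alpha).

Definition nondegenerate_pg (s t alpha : nat) : Prop :=
  (2 <= s)%N /\ (1 <= t)%N /\ (1 <= alpha)%N.

Definition pg_adj (Pt Ln : finType) (inc : Pt -> Ln -> bool) (x y : Pt) : bool :=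
  (x != y) && [exists L, inc x L && inc y L].

Definition n_ec (V : finType) (adj : V -> V -> bool) (n : nat) : Prop :=
  forall A B : {set V}, [disjoint A & B] -> #|A :|: B| = n ->
    exists z : V, [/\ z \notin A :|: B,
                      (forall a, a \in A -> adj z a) &
                      (forall b, b \in B -> ~~ adj z b)].

(* Main.v *)
Require Import Defs.
From HB Require Import structures.
From mathcomp Require Import all_boot all_order all_algebra.
From Stdlib Require Import Lia Ring.
Set Implicit Arguments. Unset Strict Implicit. Unset Printing Implicit Defensive.
Lemma card_bigcup_le (I T : finType) (A : {set I}) (F : I -> {set T}) :
  #|\bigcup_(i in A) F i| <= \sum_(i in A) #|F i|.
Proof.
elim/big_rec2: _ => [|i n U _ leUn]; first by rewrite cards0.
by rewrite (leq_trans (leq_card_setU _ _).1) ?leq_add2l.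
Qed.

Lemma card_bigcup_disj (I T : finType) (A : {set I}) (F : I -> {set T}) :
  {in A &, forall i j, i != j -> [disjoint F i & F j]} ->
  #|\bigcup_(i in A) F i| = \sum_(i in A) #|F i|.
Proof.
move Hn: #|A| => n; elim: n A Hn => [|n IH] A Hn Hd.
  move/eqP: Hn; rewrite cards_eq0 => /eqP ->.
  by rewrite !big_set0 cards0.
have : 0 < #|A| by rewrite Hn.
rewrite card_gt0 => /set0Pn [a aA].
rewrite (big_setD1 a aA) [in RHS](big_setD1 a aA) /=.
have Hd' : [disjoint F a & \bigcup_(i in A :\ a) F i].
  apply: bigcup_disjoint => i; rewrite in_setD1 => /andP [ia iA].
  by apply: Hd => //; rewrite eq_sym.
move: (leq_card_setU (F a) (\bigcup_(i in A :\ a) F i)) => [_].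
rewrite Hd' => /eqP ->; congr (_ + _).
apply: IH.
  by move: (cardsD1 a A); rewrite aA Hn add1n => -[].
by move=> i j; rewrite !in_setD1 => /andP [_ iA] /andP [_ jA]; apply: Hd.
Qed.

Lemma card_split (T : finType) (A : {set T}) (P : pred T) :
  #|[set q in A | P q]| + #|[set q in A | ~~ P q]| = #|A|.
Proof.
rewrite -(cardsID [set q | P q] A); congr (_ + _); apply: eq_card => q;
rewrite !inE; case: (q \in A); by case: (P q).
Qed.

Lemma card_sum_ind (T : finType) (A : {set T}) (P : pred T) :
  #|[set q in A | P q]| = \sum_(q in A) (P q : nat).
Proof.
rewrite (eq_bigr (fun q => if P q then 1 else 0)); last by move=> q _; case: (P q).
rewrite -big_mkcondr sum1_card; apply: eq_card => q; by rewrite !inE.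
Qed.

Lemma disjP (T : finType) (A B : {set T}) :
  (forall z, z \in A -> z \in B -> False) -> [disjoint A & B].
Proof.
move=> H; rewrite -setI_eq0; apply/eqP/setP => z; rewrite inE in_set0.
by apply/negP => /andP [a b]; exact: H z a b.
Qed.

Lemma card3 (T : finType) (x y z : T) : x != y -> x != z -> y != z -> #|[set x; y; z]| = 3.
Proof.
move=> xy xz yz.
have -> : [set x; y; z] = x |: (y |: [set z]).
  by apply/setP => q; rewrite !inE orbA.
by rewrite !cardsU1 cards1 !inE negb_or xy xz yz.
Qed.

Lemma card_D2 (T : finType) (A : {set T}) a b : a \in A -> b \in A -> a != b ->
  #|A| = (#|(A :\ a) :\ b|).+2.
Proof.
move=> aA bA ab; rewrite (cardsD1 a A) (cardsD1 b (A :\ a)) aA !inE eq_sym ab bA.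
by [].
Qed.

Section PG.
Variables (Pt Ln : finType) (inc : Pt -> Ln -> bool) (s t alpha : nat).
Hypothesis H1 : forall (p q : Pt) (L M : Ln), p != q ->
      inc p L -> inc q L -> inc p M -> inc q M -> L = M.
Hypothesis H2 : forall L : Ln, #|[set p | inc p L]| = s.+1.
Hypothesis H3 : forall p : Pt, #|[set L | inc p L]| = t.+1.
Hypothesis H4 : forall (p : Pt) (L : Ln), ~~ inc p L ->
      #|[set M | inc p M & [exists q, inc q M && inc q L]]| = alpha.

Definition col (p q : Pt) := [exists L, inc p L && inc q L].
Local Notation adj := (pg_adj inc).

Lemma colC p q : col p q = col q p.
Proof. by apply/existsP/existsP => -[L /andP [a b]]; exists L; rewrite a b. Qed.

Lemma adjC p q : adj p q = adj q p.
Proof. by rewrite /pg_adj eq_sym -/(col p q) -/(col q p) colC. Qed.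

Lemma adjE p q : adj p q = (p != q) && col p q.
Proof. by []. Qed.

Lemma colI p q L : inc p L -> inc q L -> col p q.
Proof. by move=> a b; apply/existsP; exists L; rewrite a b. Qed.

Lemma exline p : exists L, inc p L.
Proof.
have : 0 < #|[set L | inc p L]| by rewrite H3.
by rewrite card_gt0 => /set0Pn [L]; rewrite inE; exists L.
Qed.

Lemma colxx p : col p p.
Proof. by case: (exline p) => L hp; exact: (colI hp hp). Qed.

Lemma colM x M : ~~ inc x M -> #|[set q | inc q M & col x q]| = alpha.
Proof.
move=> xM; rewrite -(H4 xM); apply/eqP; rewrite eqn_leq; apply/andP; split.
- pose g q := odflt M [pick N | inc x N && inc q N].
  have gP q : col x q -> inc x (g q) && inc q (g q).
    rewrite /g; case: pickP => [N -> //|H /existsP [N HN]].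
    by move: (H N); rewrite HN.
  rewrite -(card_in_imset (f := g)).
    apply: subset_leq_card; apply/subsetP => N /imsetP [q]; rewrite inE.
    move=> /andP [qM cq] ->; rewrite inE; case/andP: (gP q cq) => -> qg /=.
    by apply/existsP; exists q; rewrite qg qM.
  move=> q q'; rewrite !inE => /andP [qM cq] /andP [q'M cq'] E.
  apply/eqP; apply/negP => /negP nq.
  case/andP: (gP q cq) => xg qg; case/andP: (gP q' cq') => _; rewrite -E => q'g.
  have := H1 nq qg q'g qM q'M; move=> EM; by move: xM; rewrite -EM xg.
- pose h N := odflt x [pick q | inc q N && inc q M].
  have hP N : [exists q, inc q N && inc q M] -> inc (h N) N && inc (h N) M.
    rewrite /h; case: pickP => [q -> //|H /existsP [q Hq]].
    by move: (H q); rewrite Hq.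
  rewrite -(card_in_imset (f := h)).
    apply: subset_leq_card; apply/subsetP => q /imsetP [N]; rewrite inE.
    move=> /andP [xN eN] ->; rewrite inE; case/andP: (hP N eN) => hN -> /=.
    by apply: colI xN hN.
  move=> N N'; rewrite !inE => /andP [xN eN] /andP [xN' eN'] E.
  case/andP: (hP N eN) => hN hM; case/andP: (hP N' eN') => hN' _.
  have xh : x != h N by apply: contraNneq xM => ->.
  by apply: (H1 xh xN hN xN'); rewrite E.
Qed.

Lemma noncolM x M : ~~ inc x M -> #|[set q | inc q M & ~~ col x q]| = s.+1 - alpha.
Proof.
move=> xM; rewrite -(H2 M) -(card_split [set q | inc q M] (col x)).
have -> : #|[set q in [set q | inc q M] | col x q]| = alpha.
  rewrite -(colM xM); apply: eq_card => q; by rewrite !inE.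
rewrite addKn; apply: eq_card => q; by rewrite !inE.
Qed.

Lemma alpha_le x y : ~~ col x y -> alpha <= s.+1.
Proof.
move=> nc; case: (exline y) => L yL.
have xL : ~~ inc x L by apply: contra nc => xL; apply: colI xL yL.
rewrite -(colM xL) -(H2 L); apply: subset_leq_card; apply/subsetP => q.
by rewrite !inE => /andP [].
Qed.


Lemma Nsize x : #|[set z | adj x z]| = s * t.+1.
Proof.
have -> : [set z | adj x z] = \bigcup_(L in [set L | inc x L]) ([set p | inc p L] :\ x).
  apply/setP => z; rewrite inE; apply/idP/bigcupP.
    rewrite adjE => /andP [xz /existsP [L /andP [xL zL]]].
    by exists L; rewrite !inE ?xL // zL eq_sym xz.
  move=> [L]; rewrite !inE => xL /andP [zx zL].
  by rewrite adjE eq_sym zx (colI xL zL).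
rewrite card_bigcup_disj.
  rewrite (eq_bigr (fun _ => s)) => [|L]; first by rewrite sum_nat_const H3 mulnC. rewrite inE => xL; move: (cardsD1 x [set p | inc p L]).
  by rewrite H2 inE xL add1n => -[].
move=> L L'; rewrite !inE => xL xL' LL'; apply: disjP => z.
rewrite !inE => /andP [zx zL] /andP [_ zL'].
by move: LL'; rewrite (H1 zx zL xL zL' xL') eqxx.
Qed.

Lemma mu_eq x y : ~~ col x y ->
  #|[set z | adj x z && adj y z]| = alpha * t.+1.
Proof.
move=> nc.
have -> : [set z | adj x z && adj y z] =
   \bigcup_(M in [set M | inc y M]) [set q | inc q M & col x q].
  apply/setP => z; rewrite inE; apply/idP/bigcupP.
    rewrite !adjE => /andP [/andP [_ cxz] /andP [_ /existsP [M /andP [yM zM]]]].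
    by exists M; rewrite !inE ?yM // zM cxz.
  move=> [M]; rewrite !inE => yM /andP [zM cxz].
  have xM : ~~ inc x M by apply: contra nc => xM; apply: colI xM yM.
  rewrite !adjE cxz (colI yM zM) !andbT; apply/andP; split.
    by apply: contraNneq xM => ->.
  by apply: contraNneq nc => ->.
rewrite card_bigcup_disj.
  rewrite (eq_bigr (fun _ => alpha)) => [|M]; first by rewrite sum_nat_const H3 mulnC. rewrite inE => yM; apply: colM.
  by apply: contra nc => xM; apply: colI xM yM.
move=> M M'; rewrite !inE => yM yM' MM'; apply: disjP => z.
rewrite !inE => /andP [zM cxz] /andP [zM' _].
have zy : z != y by apply: contraNneq nc => <-.
by move: MM'; rewrite (H1 zy zM yM zM' yM') eqxx.
Qed.

Lemma ylow x y : adj x y ->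
  t * (s.+1 - alpha) <= #|[set z | ((z != x) && ~~ adj x z) && adj y z]|.
Proof.
rewrite adjE => /andP [xy /existsP [L /andP [xL yL]]].
set U := \bigcup_(M in [set M | inc y M] :\ L) [set q | inc q M & ~~ col x q].
have HM : forall M, M \in [set M | inc y M] :\ L -> ~~ inc x M.
  move=> M; rewrite !inE => /andP [ML yM]; apply/negP => xM.
  by move: ML; rewrite (H1 xy xM yM xL yL) eqxx.
apply: (@leq_trans #|U|).
  rewrite /U card_bigcup_disj.
    rewrite (eq_bigr (fun _ => s.+1 - alpha)); last first.
      by move=> M /HM; apply: noncolM.
    rewrite sum_nat_const; move: (cardsD1 L [set M | inc y M]).
    by rewrite H3 inE yL add1n => -[<-].
  move=> M M' /setD1P [_]; rewrite inE => yM /setD1P [_]; rewrite inE => yM' MM'.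
  apply: disjP => z; rewrite !inE => /andP [zM cxz] /andP [zM' _].
  have zy : z != y by apply: contraNneq cxz => ->; apply: colI xL yL.
  by move: MM'; rewrite (H1 zy zM yM zM' yM') eqxx.
apply: subset_leq_card; apply/subsetP => z /bigcupP [M].
rewrite !inE => /andP [_ yM] /andP [zM ncz].
rewrite !adjE (negbTE ncz) andbF (colI yM zM) andbT andbT /=; apply/andP; split.
  by apply: contraNneq ncz => ->; apply: colxx.
by apply: contraNneq ncz => <-; apply: colI xL yL.
Qed.

Lemma v_bound (x : Pt) : alpha <= s.+1 ->
  (s.+1 * (s * t + alpha) <= alpha * #|Pt|)%N.
Proof.
move=> ha.
set Nx := [set z | adj x z].
set Ox := [set z | (z != x) && ~~ adj x z].
have Hv : #|Pt| = (#|Nx| + #|Ox|).+1.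
  have e1 : #|[set q in [set~ x] | adj x q]| = #|Nx|.
    apply: eq_card => q; rewrite !inE adjE; case: eqP => //= ->.
    by rewrite eqxx.
  have e2 : #|[set q in [set~ x] | ~~ adj x q]| = #|Ox|.
    by apply: eq_card => q; rewrite !inE eq_sym.
  have := card_split [set~ x] (adj x); rewrite e1 e2 cardsC1 => ->.
  by rewrite prednK //; apply/card_gt0P; exists x.
have DC : \sum_(y in Nx) #|[set z in Ox | adj y z]| =
          \sum_(z in Ox) #|[set y in Nx | adj y z]|.
  rewrite (eq_bigr (fun y => \sum_(z in Ox) (adj y z : nat))); last first.
    by move=> y _; rewrite card_sum_ind.
  rewrite exchange_big /=; apply: eq_bigr => z _; by rewrite card_sum_ind.
have L1 : #|Nx| * (t * (s.+1 - alpha)) <= \sum_(y in Nx) #|[set z in Ox | adj y z]|.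
  rewrite -sum_nat_const; apply: leq_sum => y; rewrite inE => xy.
  apply: (leq_trans (ylow xy)); apply: subset_leq_card; apply/subsetP => z.
  by rewrite !inE.
have L2 : \sum_(z in Ox) #|[set y in Nx | adj y z]| <= #|Ox| * (alpha * t.+1).
  rewrite -sum_nat_const; apply: leq_sum => z; rewrite inE => /andP [zx nxz].
  have nc : ~~ col x z by move: nxz; rewrite adjE eq_sym zx.
  rewrite -(mu_eq nc); apply: subset_leq_card; apply/subsetP => y.
  by rewrite !inE => /andP [a b]; rewrite a adjC b.
move: (leq_trans L1 (leq_trans (eq_leq DC) L2)).
rewrite Hv => {L1 L2 DC Hv}.
have -> : #|Nx| = s * t.+1 by apply: Nsize.
move: #|Ox| => o H.
set d := s.+1 - alpha in H *; have hd : s.+1 = alpha + d by rewrite subnKC.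
have H' : s * t * d <= o * alpha.
  rewrite -(leq_pmul2r (ltn0Sn t)).
  move/leP: H => H; apply/leP; rewrite -?multE -?plusE in H *. nia.
have e : alpha * s.+1 = alpha * (alpha + d) by rewrite hd.
rewrite hd; clear H; clearbody d; move/leP: H' => H'; apply/leP; rewrite -?multE -?plusE in H' e *.
nia.
Qed.


Lemma Z_low x y : x != y -> ~~ col x y ->
  #|Pt| + alpha * t.+1 <=
  #|[set z | [&& z != x, z != y, ~~ adj x z & ~~ adj y z]]| + 2 + 2 * (s * t.+1).
Proof.
move=> xy nc.
set Z := [set z | [&& z != x, z != y, ~~ adj x z & ~~ adj y z]].
set Nx := [set z | adj x z]; set Ny := [set z | adj y z].
have sub : [set: Pt] \subset (Z :|: [set x; y]) :|: (Nx :|: Ny).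
  apply/subsetP => z _; rewrite !inE.
  by case: (z == x); case: (z == y); case: (adj x z); case: (adj y z).
have e1 : #|Nx :&: Ny| = alpha * t.+1.
  rewrite -(mu_eq nc); apply: eq_card => z; by rewrite !inE.
have := cardsUI Nx Ny; rewrite e1 (Nsize x) (Nsize y) => e2.
rewrite -cardsT; apply: (leq_trans (leq_add (subset_leq_card sub) (leqnn _))).
apply: (@leq_trans ((#|Z| + 2 + #|Nx :|: Ny|) + alpha * t.+1)).
  rewrite leq_add2r; apply: (leq_trans (leq_card_setU _ _).1).
  rewrite leq_add2r; apply: (leq_trans (leq_card_setU _ _).1).
  by rewrite leq_add2l cards2; case: (x != y).
by rewrite -addnA e2 addnn -mul2n.
Qed.

Lemma Z_up x y : x != y -> ~~ col x y -> n_ec adj 3 ->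
  #|[set z | [&& z != x, z != y, ~~ adj x z & ~~ adj y z]]| <=
  alpha * t.+1 * (t.-1 * (s.+1 - alpha)).
Proof.
move=> xy nc Hec.
set Z := [set z | [&& z != x, z != y, ~~ adj x z & ~~ adj y z]].
set C := [set w | adj x w && adj y w].
set MS := fun w => [set M | [&& inc w M, ~~ inc x M & ~~ inc y M]].
set F := fun M => [set q | inc q M & ~~ col x q].
have sub : Z \subset \bigcup_(w in C) \bigcup_(M in MS w) F M.
  apply/subsetP => z; rewrite !inE => /and4P [zx zy nxz nyz].
  have ncx : ~~ col x z by move: nxz; rewrite adjE eq_sym zx.
  have ncy : ~~ col y z by move: nyz; rewrite adjE eq_sym zy.
  have D1 : [disjoint [set x; y; z] & (set0 : {set Pt})].
    by apply: disjP => q _; rewrite in_set0.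
  have D2 : #|[set x; y; z] :|: set0| = 3 by rewrite setU0 card3 // eq_sym.
  case: (Hec _ _ D1 D2) => w [_ Hw _].
  have wx : adj w x by apply: Hw; rewrite !inE eqxx.
  have wy : adj w y by apply: Hw; rewrite !inE eqxx orbT.
  have wz : adj w z by apply: Hw; rewrite !inE eqxx orbT.
  apply/bigcupP; exists w; first by rewrite inE adjC wx adjC wy.
  move: wz; rewrite adjE => /andP [_ /existsP [M /andP [wM zM]]].
  apply/bigcupP; exists M.
    rewrite inE wM /=; apply/andP; split.
      by apply: contra ncx => xM; apply: colI xM zM.
    by apply: contra ncy => yM; apply: colI yM zM.
  by rewrite inE zM ncx.
apply: (leq_trans (subset_leq_card sub)); apply: (leq_trans (card_bigcup_le _ _)).
rewrite -(mu_eq nc) -sum_nat_const; apply: leq_sum => w; rewrite inE => /andP [xw yw].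
apply: (leq_trans (card_bigcup_le _ _)).
rewrite (eq_bigr (fun _ => s.+1 - alpha)); last first.
  move=> M; rewrite inE => /and3P [_ xM _]; exact: noncolM.
rewrite sum_nat_const leq_mul2r; apply/orP; right.
move: xw; rewrite adjE => /andP [_ /existsP [Lx /andP [xLx wLx]]].
move: yw; rewrite adjE => /andP [_ /existsP [Ly /andP [yLy wLy]]].
have LL : Lx != Ly.
  by apply: contraNneq nc => E; apply: (colI xLx); rewrite E.
have := card_D2 (A := [set L | inc w L]) (a := Lx) (b := Ly).
rewrite H3 !inE wLx wLy => /(_ isT isT LL) [->] /=.
apply: subset_leq_card; apply/subsetP => M; rewrite !inE => /and3P [wM xM yM].
rewrite wM andbT; apply/andP; split.
  by apply: contraNneq yM => ->.
by apply: contraNneq xM => ->.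
Qed.

Lemma exist_nc (p0 : Pt) : 2 <= s -> n_ec adj 3 -> exists x y, x != y /\ ~~ col x y.
Proof.
move=> hs Hec; case: (exline p0) => L p0L.
pose P := [set p | inc p L]; have p0P : p0 \in P by rewrite inE.
have : 0 < #|P :\ p0|.
  by move: (cardsD1 p0 P); rewrite H2 p0P add1n => -[<-]; apply: leq_trans hs.
rewrite card_gt0 => /set0Pn [a aP].
have : 0 < #|(P :\ p0) :\ a|.
  move: (cardsD1 a (P :\ p0)) (cardsD1 p0 P); rewrite aP H2 p0P !add1n.
  by move=> e1 [e2]; move: hs; rewrite e2 e1.
rewrite card_gt0 => /set0Pn [b bP].
move: aP bP; rewrite !inE => /andP [ap0 _] /andP [ba /andP [bp0 _]].
have D1 : [disjoint (set0 : {set Pt}) & [set p0; a; b]].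
  by apply: disjP => q; rewrite in_set0.
have D2 : #|set0 :|: [set p0; a; b]| = 3 by rewrite set0U card3 // eq_sym.
case: (Hec _ _ D1 D2) => z [zB _ Hz].
have zp0 : z != p0 by apply: contraNneq zB => ->; rewrite !inE eqxx.
exists z, p0; split => //.
have : ~~ adj z p0 by apply: Hz; rewrite !inE eqxx.
by rewrite adjE zp0.
Qed.

End PG.

Import Order.TTheory GRing.Theory Num.Theory.
Local Open Scope ring_scope.

Definition qadd (x y : rat) : rat := x + y.
Definition qmul (x y : rat) : rat := x * y.
Definition qopp (x : rat) : rat := - x.
Definition qsub (x y : rat) : rat := qadd x (qopp y).
Definition qone : rat := 1.
Definition qzero : rat := 0.
Lemma qaddE (x y : rat) : x + y = qadd x y. Proof. by []. Qed.
Lemma qmulE (x y : rat) : x * y = qmul x y. Proof. by []. Qed.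
Lemma qoppE (x : rat) : - x = qopp x. Proof. by []. Qed.
Lemma qoneE : (1:rat) = qone. Proof. by []. Qed.
Lemma qzeroE : (0:rat) = qzero. Proof. by []. Qed.
Lemma q2E : (2:rat) = 1 + 1. Proof. by []. Qed.
Lemma rat_rt : @ring_theory rat qzero qone qadd qmul qsub qopp eq.
Proof.
rewrite /qsub /qadd /qmul /qopp /qone /qzero.
split; [exact: add0r|exact: addrC|exact: addrA|exact: mul1r|exact: mulrC
       |exact: mulrA|exact: mulrDl|by []|exact: subrr].
Qed.
Add Ring ratRing : rat_rt.
Ltac qring := rewrite ?q2E ?qaddE ?qmulE ?qoppE ?qoneE ?qzeroE;
  match goal with |- ?x = ?y => change (@eq rat x y) end; ring.

Lemma natQ (n : nat) : n%:Q = n%:R.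
Proof. by rewrite -pmulrn. Qed.

Lemma final_alg (a S T X V : rat) : 0 < a ->
  (S + 1) * (S * T + a) <= a * V ->
  V + a * (T + 1) <= X + 2 + 2 * (S * (T + 1)) ->
  X <= a * (T + 1) * ((T - 1) * (S + 1 - a)) ->
  a * (T ^+ 2 - 1) * (S - a + 1) >=
    (S + 1) * (S * T + a) / a + (a - 2 * S) * (T + 1) - 2.
Proof.
move=> ha hv hl hu; rewrite -subr_ge0.
have E : a * (T ^+ 2 - 1) * (S - a + 1) -
    ((S + 1) * (S * T + a) / a + (a - 2 * S) * (T + 1) - 2) =
  (a * (T + 1) * ((T - 1) * (S + 1 - a)) - X) +
  (X + 2 + 2 * (S * (T + 1)) - (V + a * (T + 1))) +
  (a * V - (S + 1) * (S * T + a)) / a + V * (1 - a / a).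
  by rewrite expr2; qring.
rewrite E mulfV ?lt0r_neq0 // subrr mulr0 addr0.
apply: addr_ge0; first apply: addr_ge0; rewrite ?subr_ge0 //.
by apply: divr_ge0; rewrite ?subr_ge0 // ltW.
Qed.

Theorem mainTheorem8 (Pt Ln : finType) (inc : Pt -> Ln -> bool)
    (s t alpha : nat) (p0 : Pt) :
  partial_geometry inc s t alpha ->
  nondegenerate_pg s t alpha ->
  n_ec (pg_adj inc) 3 ->
  alpha%:Q * (t%:Q ^+ 2 - 1) * (s%:Q - alpha%:Q + 1) >=
    (s%:Q + 1) * (s%:Q * t%:Q + alpha%:Q) / alpha%:Q
    + (alpha%:Q - 2 * s%:Q) * (t%:Q + 1) - 2.
Proof.
move=> [H1 [H2 [H3 H4]]] [hs [ht ha]] Hec.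
case: (exist_nc H2 H3 p0 hs Hec) => x [y [xy nc]].
have hal := alpha_le H1 H2 H3 H4 nc.
have hv := v_bound H1 H2 H3 H4 x hal.
have hl := Z_low H1 H2 H3 H4 xy nc.
have hu := Z_up H1 H2 H3 H4 xy nc Hec.
move: (#|_| : nat) hl hu => X hl hu.
apply: (final_alg (X := X%:Q) (V := #|Pt|%:Q)).
- by rewrite natQ ltr0n.
- rewrite !natQ natr1 -?natrM -?natrD -?natrM ler_nat //.
- have e2 : (2 : rat) = (2%N)%:R by [].
  rewrite !natQ natr1 -?natrM -?natrD -?natrM -?natrD ler_nat //.
- have e3 : (t%:R - 1 : rat) = (t.-1)%:R by rewrite -subn1 natrB.
  rewrite !natQ !natr1 e3 -(natrB _ hal) -?natrM ler_nat //.
Qed.
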